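(* Let $\mathbb{B}$ be a finitely complete category and $\chi:\mathbb{D}\to\mathbb{E}$ a notion of structure on a fibration $q:\mathbb{E}\to\mathbb{B}$. Then $\chi$ is definable if and only if there exist fibred functors $\operatorname{Cart}(\mathbb{D})\to\operatorname{Cart}(\mathbb{B}^\to_\bullet)$ and $\zeta:\operatorname{Cart}(\mathbb{E})\to\operatorname{Cart}(\mathbb{B}^\to)$ over $\mathbb{B}$ making the square with $\operatorname{Cart}(\chi):\operatorname{Cart}(\mathbb{D})\to\operatorname{Cart}(\mathbb{E})$ and the forgetful functor $\operatorname{Cart}(\mathbb{B}^\to_\bullet)\to\operatorname{Cart}(\mathbb{B}^\to)$ a strict pullback of categories.
   Context: $\mathbb{B}^\to\to\mathbb{B}$ is the codomain fibration (cartesian maps = pullback squares). $\mathbb{B}^\to_\bullet$ is the category of morphisms $f:X\to I$ of $\mathbb{B}$ equipped with a section, with morphisms the commutative squares compatible with sections, fibred over $\mathbb{B}$ via the codomain. For a fibration $\mathbb{F}$, $\operatorname{Cart}(\mathbb{F})$ is the wide subcategory of cartesian morphisms (again fibred over $\mathbb{B}$). A notion of structure on $q$ is a fibration $p:\mathbb{D}\to\mathbb{B}$ with a functor $\chi:\mathbb{D}\to\mathbb{E}$, $q\circ\chi=p$, preserving cartesian morphisms, such that $\operatorname{Cart}(\chi)$ is a discrete fibration; it is definable if $\operatorname{Cart}(\chi)$ has a right adjoint as an ordinary functor. *)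

(* Defs.v *)
From Stdlib Require Import ProofIrrelevance.

(** * Categories and functors (hom-equality is Leibniz equality) *)

Record Category := {
  Ob :> Type;
  Hom : Ob -> Ob -> Type;
  idm : forall x, Hom x x;
  comp : forall x y z, Hom y z -> Hom x y -> Hom x z;
  comp_idl : forall x y (f : Hom x y), comp x y y (idm y) f = f;
  comp_idr : forall x y (f : Hom x y), comp x x y f (idm x) = f;
  comp_assoc : forall x y z w (f : Hom z w) (g : Hom y z) (h : Hom x y),
      comp x y w (comp y z w f g) h = comp x z w f (comp x y z g h) }.
Arguments Hom {c} x y.
Arguments idm {c} x.
Arguments comp {c x y z} f g.

Record Functor (C D : Category) := {
  fobj :> C -> D;
  fmap : forall x y : C, Hom x y -> Hom (fobj x) (fobj y);
  fmap_id : forall x, fmap x x (idm x) = idm (fobj x);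
  fmap_comp : forall x y z (f : Hom y z) (g : Hom x y),
      fmap x z (comp f g) = comp (fmap y z f) (fmap x y g) }.
Arguments fobj {C D} f0 x.
Arguments fmap {C D} f0 {x y} _.

Definition Fcomp {C D E : Category} (G : Functor D E) (F : Functor C D) : Functor C E.
Proof.
  refine {| fobj := fun x => fobj G (fobj F x);
            fmap := fun x y f => fmap G (fmap F f) |}.
  - intros x. rewrite fmap_id. apply fmap_id.
  - intros x y z f g. rewrite fmap_comp. apply fmap_comp.
Defined.

Definition functor_eq {C D : Category} (F G : Functor C D) : Prop :=
  (forall x : C, fobj F x = fobj G x) /\
  (forall (x y : C) (f : Hom x y),
      existT (fun ab : D * D => Hom (fst ab) (snd ab)) (fobj F x, fobj F y) (fmap F f)
      = existT (fun ab : D * D => Hom (fst ab) (snd ab)) (fobj G x, fobj G y) (fmap G f)).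

(** * Cartesian morphisms and fibrations *)

Definition cartesian {E B : Category} (p : Functor E B) {x y : E} (f : Hom x y) : Prop :=
  forall (z : E) (g : Hom z y) (u : Hom (fobj p z) (fobj p x)),
    comp (fmap p f) u = fmap p g ->
    exists! h : Hom z x, comp f h = g /\ fmap p h = u.

Definition is_fibration {E B : Category} (p : Functor E B) : Prop :=
  forall (y : E) (I : B) (u : Hom I (fobj p y)),
    exists (x : E) (f : Hom x y), cartesian p f /\
      existT (fun J => Hom J (fobj p y)) (fobj p x) (fmap p f)
      = existT (fun J => Hom J (fobj p y)) I u.

Lemma cartesian_id {E B : Category} (p : Functor E B) (x : E) : cartesian p (idm x).
Proof.
  intros z g u H. rewrite fmap_id, comp_idl in H. subst u.
  exists g. split.
  - split; [apply comp_idl | reflexivity].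
  - intros h [H1 _]. rewrite comp_idl in H1. symmetry; exact H1.
Qed.

Lemma cartesian_comp {E B : Category} (p : Functor E B) {x y w : E}
  (f2 : Hom y w) (f1 : Hom x y) :
  cartesian p f2 -> cartesian p f1 -> cartesian p (comp f2 f1).
Proof.
  intros C2 C1 z g u H.
  rewrite fmap_comp, comp_assoc in H.
  destruct (C2 z g (comp (fmap p f1) u) H) as [h2 [[E2 P2] U2]].
  destruct (C1 z h2 u (eq_sym P2)) as [h1 [[E1 P1] U1]].
  exists h1. split.
  - split; [rewrite comp_assoc, E1; exact E2 | exact P1].
  - intros h [Eh Ph].
    apply U1. split; [|exact Ph].
    symmetry. apply U2. split.
    + rewrite <- comp_assoc. exact Eh.
    + rewrite fmap_comp, Ph. reflexivity.
Qed.

Lemma sig_eq_pi {A : Type} {P : A -> Prop} (a b : {x : A | P x}) :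
  proj1_sig a = proj1_sig b -> a = b.
Proof.
  destruct a as [a pa], b as [b pb]; simpl; intros ->.
  f_equal; apply proof_irrelevance.
Qed.

Definition Cart {E B : Category} (p : Functor E B) : Category.
Proof.
  refine {| Ob := Ob E;
            Hom := fun x y => {f : Hom x y | cartesian p f};
            idm := fun x => exist _ (idm x) (cartesian_id p x);
            comp := fun x y z f g =>
              exist _ (comp (proj1_sig f) (proj1_sig g))
                      (cartesian_comp p _ _ (proj2_sig f) (proj2_sig g)) |}.
  - intros; apply sig_eq_pi; simpl; apply comp_idl.
  - intros; apply sig_eq_pi; simpl; apply comp_idr.
  - intros; apply sig_eq_pi; simpl; apply comp_assoc.
Defined.

Definition Incl {E B : Category} (p : Functor E B) : Functor (Cart p) E.
Proof.
  refine {| fobj := fun x : Cart p => (x : E);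
            fmap := fun x y f => proj1_sig f |}; reflexivity.
Defined.

Definition CartProj {E B : Category} (p : Functor E B) : Functor (Cart p) B :=
  Fcomp p (Incl p).

Definition fibred_functor {A A' B : Category} (pA : Functor A B) (pA' : Functor A' B)
  (F : Functor A A') : Prop :=
  functor_eq (Fcomp pA' F) pA /\
  (forall (x y : A) (f : Hom x y), cartesian pA f -> cartesian pA' (fmap F f)).

(** * Notions of structure *)

Definition preserves_cartesian {B E D : Category} (q : Functor E B) (chi : Functor D E) : Prop :=
  forall (x y : D) (f : Hom x y), cartesian (Fcomp q chi) f -> cartesian q (fmap chi f).

Definition CartF {B E D : Category} {q : Functor E B} {chi : Functor D E}
  (H : preserves_cartesian q chi) : Functor (Cart (Fcomp q chi)) (Cart q).
Proof.
  refine {| fobj := fun x : Cart (Fcomp q chi) => (fobj chi x : Cart q);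
            fmap := fun x y f => exist _ (fmap chi (proj1_sig f)) (H _ _ _ (proj2_sig f)) |}.
  - intros; apply sig_eq_pi; simpl; apply fmap_id.
  - intros; apply sig_eq_pi; simpl; apply fmap_comp.
Defined.

Definition discrete_fibration {C D : Category} (F : Functor C D) : Prop :=
  forall (c : C) (d : D) (u : Hom d (fobj F c)),
    exists! s : {x : C & Hom x c},
      existT (fun a => Hom a (fobj F c)) (fobj F (projT1 s)) (fmap F (projT2 s))
      = existT (fun a => Hom a (fobj F c)) d u.

Definition has_right_adjoint {C D : Category} (F : Functor C D) : Prop :=
  exists (G : Functor D C) (eta : forall x : C, Hom x (fobj G (fobj F x)))
         (eps : forall y : D, Hom (fobj F (fobj G y)) y),
    (forall (x x' : C) (f : Hom x x'), comp (eta x') f = comp (fmap G (fmap F f)) (eta x)) /\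
    (forall (y y' : D) (g : Hom y y'), comp g (eps y) = comp (eps y') (fmap F (fmap G g))) /\
    (forall x : C, comp (eps (fobj F x)) (fmap F (eta x)) = idm (fobj F x)) /\
    (forall y : D, comp (fmap G (eps y)) (eta (fobj G y)) = idm (fobj G y)).

Definition is_pullback {B : Category} {P X Y Z : B}
  (p1 : Hom P X) (p2 : Hom P Y) (f : Hom X Z) (g : Hom Y Z) : Prop :=
  comp f p1 = comp g p2 /\
  forall (W : B) (a : Hom W X) (b : Hom W Y), comp f a = comp g b ->
    exists! h : Hom W P, comp p1 h = a /\ comp p2 h = b.

Definition is_terminal {B : Category} (T : B) : Prop :=
  forall X : B, exists! h : Hom X T, True.

Definition finitely_complete (B : Category) : Prop :=
  (exists T : B, is_terminal T) /\
  (forall (X Y Z : B) (f : Hom X Z) (g : Hom Y Z),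
      exists (P : B) (p1 : Hom P X) (p2 : Hom P Y), is_pullback p1 p2 f g).

(** * The arrow category B^-> and pointed arrows B^->_bullet *)

Record arr_ob (B : Category) := { a_src : B; a_tgt : B; a_map : Hom a_src a_tgt }.
Arguments a_src {B} _. Arguments a_tgt {B} _. Arguments a_map {B} _.

Definition arr_hom {B : Category} (a b : arr_ob B) : Type :=
  {st : Hom (a_src a) (a_src b) * Hom (a_tgt a) (a_tgt b) |
     comp (a_map b) (fst st) = comp (snd st) (a_map a)}.

Lemma arr_id_ok {B : Category} (a : arr_ob B) :
  comp (a_map a) (fst (idm (a_src a), idm (a_tgt a))) = comp (snd (idm (a_src a), idm (a_tgt a))) (a_map a).
Proof. simpl. rewrite comp_idl, comp_idr. reflexivity. Qed.

Definition arr_id {B : Category} (a : arr_ob B) : arr_hom a a :=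
  exist _ (idm (a_src a), idm (a_tgt a)) (arr_id_ok a).

Lemma arr_comp_ok {B : Category} {a b c : arr_ob B} (f : arr_hom b c) (g : arr_hom a b) :
  comp (a_map c) (fst (comp (fst (proj1_sig f)) (fst (proj1_sig g)),
                       comp (snd (proj1_sig f)) (snd (proj1_sig g))))
  = comp (snd (comp (fst (proj1_sig f)) (fst (proj1_sig g)),
               comp (snd (proj1_sig f)) (snd (proj1_sig g)))) (a_map a).
Proof.
  destruct f as [[f1 f2] Hf], g as [[g1 g2] Hg]; simpl in *.
  rewrite <- comp_assoc, Hf, comp_assoc, Hg, comp_assoc. reflexivity.
Qed.

Definition arr_comp {B : Category} (a b c : arr_ob B) (f : arr_hom b c) (g : arr_hom a b)
  : arr_hom a c :=
  exist _ (comp (fst (proj1_sig f)) (fst (proj1_sig g)),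
           comp (snd (proj1_sig f)) (snd (proj1_sig g))) (arr_comp_ok f g).

Definition Arrow (B : Category) : Category.
Proof.
  refine {| Ob := arr_ob B; Hom := @arr_hom B; idm := @arr_id B; comp := @arr_comp B |}.
  - intros a b [[f1 f2] Hf]; apply sig_eq_pi; simpl; rewrite !comp_idl; reflexivity.
  - intros a b [[f1 f2] Hf]; apply sig_eq_pi; simpl; rewrite !comp_idr; reflexivity.
  - intros a b c d [[f1 f2] Hf] [[g1 g2] Hg] [[h1 h2] Hh]; apply sig_eq_pi; simpl;
      rewrite !comp_assoc; reflexivity.
Defined.

Definition cod (B : Category) : Functor (Arrow B) B.
Proof.
  refine {| fobj := fun a : Arrow B => a_tgt a;
            fmap := fun a b (f : Hom a b) => snd (proj1_sig f) |}; reflexivity.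
Defined.

Record parr_ob (B : Category) := {
  pa_src : B; pa_tgt : B; pa_map : Hom pa_src pa_tgt;
  pa_sec : Hom pa_tgt pa_src;
  pa_sec_ok : comp pa_map pa_sec = idm pa_tgt }.
Arguments pa_src {B} _. Arguments pa_tgt {B} _. Arguments pa_map {B} _.
Arguments pa_sec {B} _.

Definition parr_hom {B : Category} (a b : parr_ob B) : Type :=
  {st : Hom (pa_src a) (pa_src b) * Hom (pa_tgt a) (pa_tgt b) |
     comp (pa_map b) (fst st) = comp (snd st) (pa_map a) /\
     comp (pa_sec b) (snd st) = comp (fst st) (pa_sec a)}.

Lemma parr_id_ok {B : Category} (a : parr_ob B) :
  comp (pa_map a) (fst (idm (pa_src a), idm (pa_tgt a))) = comp (snd (idm (pa_src a), idm (pa_tgt a))) (pa_map a) /\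
  comp (pa_sec a) (snd (idm (pa_src a), idm (pa_tgt a))) = comp (fst (idm (pa_src a), idm (pa_tgt a))) (pa_sec a).
Proof. simpl. rewrite !comp_idl, !comp_idr. split; reflexivity. Qed.

Definition parr_id {B : Category} (a : parr_ob B) : parr_hom a a :=
  exist _ (idm (pa_src a), idm (pa_tgt a)) (parr_id_ok a).

Lemma parr_comp_ok {B : Category} {a b c : parr_ob B} (f : parr_hom b c) (g : parr_hom a b) :
  let st := (comp (fst (proj1_sig f)) (fst (proj1_sig g)),
             comp (snd (proj1_sig f)) (snd (proj1_sig g))) in
  comp (pa_map c) (fst st) = comp (snd st) (pa_map a) /\
  comp (pa_sec c) (snd st) = comp (fst st) (pa_sec a).
Proof.
  destruct f as [[f1 f2] [Hf Hf']], g as [[g1 g2] [Hg Hg']]; simpl in *. split.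
  - rewrite <- comp_assoc, Hf, comp_assoc, Hg, comp_assoc. reflexivity.
  - rewrite <- comp_assoc, Hf', comp_assoc, Hg', comp_assoc. reflexivity.
Qed.

Definition parr_comp {B : Category} (a b c : parr_ob B) (f : parr_hom b c) (g : parr_hom a b)
  : parr_hom a c :=
  exist _ (comp (fst (proj1_sig f)) (fst (proj1_sig g)),
           comp (snd (proj1_sig f)) (snd (proj1_sig g))) (parr_comp_ok f g).

Definition PArrow (B : Category) : Category.
Proof.
  refine {| Ob := parr_ob B; Hom := @parr_hom B; idm := @parr_id B; comp := @parr_comp B |}.
  - intros a b [[f1 f2] Hf]; apply sig_eq_pi; simpl; rewrite !comp_idl; reflexivity.
  - intros a b [[f1 f2] Hf]; apply sig_eq_pi; simpl; rewrite !comp_idr; reflexivity.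
  - intros a b c d [[f1 f2] Hf] [[g1 g2] Hg] [[h1 h2] Hh]; apply sig_eq_pi; simpl;
      rewrite !comp_assoc; reflexivity.
Defined.

Definition codp (B : Category) : Functor (PArrow B) B.
Proof.
  refine {| fobj := fun a : PArrow B => pa_tgt a;
            fmap := fun a b (f : Hom a b) => snd (proj1_sig f) |}; reflexivity.
Defined.

Definition Forget (B : Category) : Functor (PArrow B) (Arrow B).
Proof.
  refine {| fobj := fun a : PArrow B =>
              ({| a_src := pa_src a; a_tgt := pa_tgt a; a_map := pa_map a |} : Arrow B);
            fmap := fun a b (f : Hom a b) =>
              (exist (fun st : Hom (pa_src a) (pa_src b) * Hom (pa_tgt a) (pa_tgt b) =>
                        comp (pa_map b) (fst st) = comp (snd st) (pa_map a))
                     (proj1_sig f) (proj1 (proj2_sig f))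
                 : @arr_hom B (Build_arr_ob B _ _ (pa_map a)) (Build_arr_ob B _ _ (pa_map b))) |};
  intros; apply sig_eq_pi; reflexivity.
Defined.

(** The square  A --K--> C, A --Phi--> P, C --Z--> X, P --V--> X  commutes
    strictly and the comparison functor from A into the (strict) pullback
    category C x_X P is an isomorphism: bijective on objects and on hom-sets. *)
Definition strict_pullback {A C P X : Category}
  (K : Functor A C) (Phi : Functor A P) (Z : Functor C X) (V : Functor P X) : Prop :=
  functor_eq (Fcomp Z K) (Fcomp V Phi) /\
  (forall (c : C) (s : P), fobj Z c = fobj V s ->
      exists! a : A, fobj K a = c /\ fobj Phi a = s) /\
  (forall (a a' : A) (g : Hom (fobj K a) (fobj K a')) (t : Hom (fobj Phi a) (fobj Phi a')),
      existT (fun xy : X * X => Hom (fst xy) (snd xy))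
             (fobj Z (fobj K a), fobj Z (fobj K a')) (fmap Z g)
      = existT (fun xy : X * X => Hom (fst xy) (snd xy))
             (fobj V (fobj Phi a), fobj V (fobj Phi a')) (fmap V t) ->
      exists! f : Hom a a', fmap K f = g /\ fmap Phi f = t).

(* Main.v *)
Require Import Defs.
From Stdlib Require Import ProofIrrelevance Eqdep IndefiniteDescription.

Lemma cart_cancel {E B : Category} (p : Functor E B) {x y w : E}
  (f : Hom y w) (h : Hom x y) :
  cartesian p f -> cartesian p (comp f h) -> cartesian p h.
Proof.
  intros Cf Cfh z g u H.
  assert (H' : comp (fmap p (comp f h)) u = fmap p (comp f g)).
  { rewrite !fmap_comp, comp_assoc, H. reflexivity. }
  destruct (Cfh z (comp f g) u H') as [k [[E1 P1] U1]].
  exists k. split.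
  - split; [|exact P1].
    destruct (Cf z (comp f g) (fmap p g) (eq_sym (fmap_comp _ _ p _ _ _ f g))) as [l [_ Ul]].
    transitivity l; [symmetry|]; apply Ul; split.
    + rewrite <- comp_assoc. exact E1.
    + rewrite fmap_comp, P1. exact H.
    + reflexivity.
    + reflexivity.
  - intros k' [E2 P2]. apply U1. split; [|exact P2].
    rewrite comp_assoc, E2. reflexivity.
Qed.

Lemma cart_all {E B : Category} (p : Functor E B) (x y : Cart p) (f : Hom x y) :
  cartesian (CartProj p) f.
Proof.
  intros z g u H. destruct f as [f Cf], g as [g Cg]. simpl in *.
  destruct (Cf z g u H) as [h [[E1 P1] U1]].
  assert (Ch : cartesian p h) by (apply (cart_cancel p f h Cf); rewrite E1; exact Cg).
  exists (exist _ h Ch). split.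
  - split; [apply sig_eq_pi; simpl; exact E1 | exact P1].
  - intros [h' Ch'] [E2 P2]. apply sig_eq_pi; simpl.
    apply U1. split; [exact (f_equal (@proj1_sig _ _) E2) | exact P2].
Qed.

Lemma disc_faithful {C D : Category} (F : Functor C D) (hd : discrete_fibration F)
  (x c : C) (f1 f2 : Hom x c) : fmap F f1 = fmap F f2 -> f1 = f2.
Proof.
  intros H.
  destruct (hd c (fobj F x) (fmap F f1)) as [s [_ U]].
  assert (A1 := U (existT _ x f1) eq_refl).
  assert (A2 := U (existT _ x f2) (f_equal (existT _ (fobj F x)) (eq_sym H))).
  rewrite A1 in A2. apply inj_pair2 in A2. exact A2.
Qed.

Definition pbsq {B : Category} {A I A' I' : B} (m : Hom A I) (m' : Hom A' I')
  (top : Hom A A') (bot : Hom I I') : Prop :=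
  forall (W : B) (x : Hom W A') (y : Hom W I), comp m' x = comp bot y ->
    exists! h : Hom W A, comp top h = x /\ comp m h = y.

Lemma pb_cod {B : Category} (a b : Arrow B) (f : Hom a b) :
  pbsq (a_map a) (a_map b) (fst (proj1_sig f)) (snd (proj1_sig f)) ->
  cartesian (cod B) f.
Proof.
  destruct f as [[top bot] Hf]; simpl in *. intros Pb z g u H.
  destruct g as [[g1 g2] Hg]. simpl in *.
  assert (Hc : comp (a_map b) g1 = comp bot (comp u (a_map z))).
  { rewrite Hg, <- comp_assoc, H. reflexivity. }
  destruct (Pb _ g1 _ Hc) as [h [[E1 E2] U]].
  assert (Hh : comp (a_map a) (fst (h, u)) = comp (snd (h, u)) (a_map z)) by exact E2.
  exists (exist _ (h, u) Hh). split.
  - split; [apply sig_eq_pi; simpl; rewrite E1, H; reflexivity | reflexivity].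
  - intros [[h1 h2] Hh'] [F1 F2]. simpl in *. subst h2.
    apply sig_eq_pi; simpl. f_equal. apply U. split.
    + exact (f_equal (fun k => fst (proj1_sig k)) F1).
    + exact Hh'.
Qed.

Lemma cod_pb {B : Category} (a b : Arrow B) (f : Hom a b) :
  cartesian (cod B) f ->
  pbsq (a_map a) (a_map b) (fst (proj1_sig f)) (snd (proj1_sig f)).
Proof.
  destruct f as [[top bot] Hf]; simpl in *. intros Cf W x y H.
  set (z := {| a_src := W; a_tgt := W; a_map := idm W |} : Arrow B).
  assert (Hg : comp (a_map b) (fst (x, comp bot y)) = comp (snd (x, comp bot y)) (a_map z)).
  { simpl. rewrite comp_idr. exact H. }
  set (g := exist _ (x, comp bot y) Hg : Hom z b).
  destruct (Cf z g y eq_refl) as [[[h1 h2] Hh] [[F1 F2] U]]. simpl in *. subst h2.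
  exists h1. split.
  - split.
    + exact (f_equal (fun k => fst (proj1_sig k)) F1).
    + rewrite Hh. apply comp_idr.
  - intros h' [G1 G2].
    assert (Hh' : comp (a_map a) (fst (h', y)) = comp (snd (h', y)) (a_map z)).
    { simpl. rewrite comp_idr. exact G2. }
    assert (X := U (exist _ (h', y) Hh')).
    refine (f_equal (fun k => fst (proj1_sig k)) (X _)). split; [|reflexivity].
    apply sig_eq_pi; simpl. rewrite G1. reflexivity.
Qed.

Lemma pb_codp {B : Category} (a b : PArrow B) (f : Hom a b) :
  pbsq (pa_map a) (pa_map b) (fst (proj1_sig f)) (snd (proj1_sig f)) ->
  cartesian (codp B) f.
Proof.
  destruct f as [[top bot] [Hf Hf']]; simpl in *. intros Pb z g u H.
  destruct g as [[g1 g2] [Hg Hg']]. simpl in *.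
  assert (Hc : comp (pa_map b) g1 = comp bot (comp u (pa_map z))).
  { rewrite Hg, <- comp_assoc, H. reflexivity. }
  destruct (Pb _ g1 _ Hc) as [h [[E1 E2] U]].
  assert (Hs : comp (pa_sec a) u = comp h (pa_sec z)).
  { assert (Hc2 : comp (pa_map b) (comp top (comp (pa_sec a) u)) = comp bot u).
    { rewrite <- comp_assoc, Hf, !comp_assoc, <- (comp_assoc _ _ _ _ _ (pa_map a)), (pa_sec_ok _ a), comp_idl. reflexivity. }
    destruct (Pb _ _ _ Hc2) as [k [_ Uk]].
    transitivity k; [symmetry|]; apply Uk; split.
    - reflexivity.
    - rewrite <- comp_assoc, (pa_sec_ok _ a), comp_idl. reflexivity.
    - rewrite <- comp_assoc, E1, <- Hg', <- H, <- comp_assoc, Hf', comp_assoc. reflexivity.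
    - rewrite <- comp_assoc, E2, comp_assoc, (pa_sec_ok _ z), comp_idr. reflexivity.
  }
  assert (Hh : comp (pa_map a) (fst (h, u)) = comp (snd (h, u)) (pa_map z) /\
               comp (pa_sec a) (snd (h, u)) = comp (fst (h, u)) (pa_sec z)) by (split; assumption).
  exists (exist _ (h, u) Hh). split.
  - split; [apply sig_eq_pi; simpl; rewrite E1, H; reflexivity | reflexivity].
  - intros [[h1 h2] [Hh1 Hh2]] [F1 F2]. simpl in *. subst h2.
    apply sig_eq_pi; simpl. f_equal. apply U. split.
    + exact (f_equal (fun k => fst (proj1_sig k)) F1).
    + exact Hh1.
Qed.

Section UA.
Context {C D : Category} (F : Functor C D) (R : D -> C)
  (ep : forall y : D, Hom (fobj F (R y)) y)
  (U : forall (x : C) (y : D) (g : Hom (fobj F x) y),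
      exists! f : Hom x (R y), comp (ep y) (fmap F f) = g).

Definition uf (x : C) (y : D) (g : Hom (fobj F x) y) : Hom x (R y) :=
  proj1_sig (constructive_indefinite_description _ (U x y g)).

Lemma uf_spec x y g : comp (ep y) (fmap F (uf x y g)) = g.
Proof. unfold uf. destruct (constructive_indefinite_description _ _) as [f Hf]; simpl. exact (proj1 Hf). Qed.

Lemma uf_uniq x y g f : comp (ep y) (fmap F f) = g -> f = uf x y g.
Proof. unfold uf. destruct (constructive_indefinite_description _ _) as [f0 Hf0].
  simpl. intros Hf. symmetry. apply (proj2 Hf0). exact Hf. Qed.

Definition Gr : Functor D C.
Proof.
  refine {| fobj := R; fmap := fun y y' h => uf (R y) y' (comp h (ep y)) |}.
  - intros y. symmetry. apply uf_uniq. rewrite fmap_id, comp_idr, comp_idl. reflexivity.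
  - intros y y' y'' h k. symmetry. apply uf_uniq.
    rewrite fmap_comp, <- comp_assoc, uf_spec, comp_assoc, uf_spec, comp_assoc. reflexivity.
Defined.

Lemma UA_adj : has_right_adjoint F.
Proof.
  exists Gr, (fun x => uf x (fobj F x) (idm _)), ep.
  split; [|split; [|split]].
  - intros x x' f. simpl.
    transitivity (uf x (fobj F x') (fmap F f)); [|symmetry]; apply uf_uniq.
    + rewrite fmap_comp, <- comp_assoc, uf_spec, comp_idl. reflexivity.
    + rewrite fmap_comp, <- comp_assoc, uf_spec, comp_assoc, uf_spec, comp_idr. reflexivity.
  - intros y y' g. simpl. rewrite uf_spec. reflexivity.
  - intros x. apply uf_spec.
  - intros y. simpl.
    transitivity (uf (R y) y (ep y)); [|symmetry]; apply uf_uniq.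
    + rewrite fmap_comp, <- comp_assoc, uf_spec, comp_assoc, uf_spec, comp_idr. reflexivity.
    + rewrite fmap_id, comp_idr. reflexivity.
Qed.
End UA.

Lemma UA_adj' {C D : Category} (F : Functor C D) :
  (forall y : D, exists (r : C) (e : Hom (fobj F r) y),
      forall (x : C) (g : Hom (fobj F x) y), exists! f : Hom x r, comp e (fmap F f) = g) ->
  has_right_adjoint F.
Proof.
  intros H.
  pose (R := fun y => proj1_sig (constructive_indefinite_description _ (H y))).
  pose (ep := fun y => proj1_sig (constructive_indefinite_description _
                 (proj2_sig (constructive_indefinite_description _ (H y))))).
  apply (UA_adj F R ep).
  intros x y g. unfold ep, R.
  destruct (constructive_indefinite_description _ (H y)) as [r He]; simpl.
  destruct (constructive_indefinite_description _ He) as [e Hu]; simpl.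
  apply Hu.
Qed.

Definition idcast {C : Category} {a b : C} (E : a = b) : Hom a b :=
  match E in _ = b return Hom a b with eq_refl => idm a end.

Lemma idcast_refl {C : Category} {a : C} (E : a = a) : idcast E = idm a.
Proof. rewrite (proof_irrelevance _ E eq_refl). reflexivity. Qed.

Lemma idcast_pi {C : Category} {a b : C} (E E' : a = b) : idcast E = idcast E'.
Proof. rewrite (proof_irrelevance _ E E'). reflexivity. Qed.

Lemma idcast_comp {C : Category} {a b c : C} (E1 : a = b) (E2 : b = c) (E3 : a = c) :
  comp (idcast E2) (idcast E1) = idcast E3.
Proof. destruct E1, E2. rewrite (idcast_refl E3). simpl. apply comp_idl. Qed.

Lemma idcast_inv {C : Category} {a b : C} (E1 : a = b) (E2 : b = a) :
  comp (idcast E2) (idcast E1) = idm a.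
Proof. rewrite (idcast_comp E1 E2 eq_refl). reflexivity. Qed.

Lemma fmap_comp_r {C D : Category} (F : Functor C D) {x y z : C} (f : Hom y z) (g : Hom x y)
  (h : Hom (fobj F x) (fobj F z)) : fmap F (comp f g) = h -> comp (fmap F f) (fmap F g) = h.
Proof. rewrite fmap_comp. auto. Qed.

Lemma arr_mk_inj {B : Category} (S T : B) (m m' : Hom S T) :
  Build_arr_ob B S T m = Build_arr_ob B S T m' -> m = m'.
Proof.
  intros H.
  assert (H' := f_equal (fun a => existT (fun st : B * B => Hom (fst st) (snd st))
                                         (a_src a, a_tgt a) (a_map a)) H).
  simpl in H'. apply inj_pair2 in H'. exact H'.
Qed.

Lemma parr_sec_inj {B : Category} (S T : B) (m : Hom S T) (s s' : Hom T S) ok ok' :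
  Build_parr_ob B S T m s ok = Build_parr_ob B S T m s' ok' -> s = s'.
Proof.
  intros H.
  assert (H' := f_equal (fun a => existT (fun st : B * B => Hom (fst st) (snd st))
                                         (pa_tgt a, pa_src a) (pa_sec a)) H).
  simpl in H'. apply inj_pair2 in H'. exact H'.
Qed.

Lemma rw2 {C : Category} {a b c b' w : C} (f : Hom b c) (g : Hom a b) (h : Hom b' c)
  (k : Hom a b') (r : Hom w a) :
  comp f g = comp h k -> comp f (comp g r) = comp h (comp k r).
Proof. intros H. rewrite <- !comp_assoc, H. reflexivity. Qed.

Lemma cast_merge {C : Category} {a b c d : C} (E1 : a = b) (E2 : b = c) (r : Hom d a) :
  comp (idcast E2) (comp (idcast E1) r) = comp (idcast (eq_trans E1 E2)) r.
Proof. rewrite <- comp_assoc, (idcast_comp E1 E2 (eq_trans E1 E2)). reflexivity. Qed.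

Lemma cast_id_l {C : Category} {a d : C} (E : a = a) (r : Hom d a) : comp (idcast E) r = r.
Proof. rewrite idcast_refl. apply comp_idl. Qed.

Lemma cast_id_r {C : Category} {a d : C} (E : a = a) (r : Hom a d) : comp r (idcast E) = r.
Proof. rewrite idcast_refl. apply comp_idr. Qed.

Lemma cast_cancel {C : Category} {a b d : C} (E : a = b) (f g : Hom d a) :
  comp (idcast E) f = comp (idcast E) g -> f = g.
Proof. destruct E. simpl. rewrite !comp_idl. auto. Qed.

Lemma sig_cast {C : Category} (T a a' : C) (f : Hom a T) (g : Hom a' T) :
  existT (fun J => Hom J T) a f = existT _ a' g -> forall E : a = a', f = comp g (idcast E).
Proof.
  intros H. pose proof (f_equal (@projT1 _ _) H) as E0. cbn [projT1] in E0. subst a'.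
  apply inj_pair2 in H. subst g. intros E. rewrite cast_id_r. reflexivity.
Qed.

Lemma hom_existT {C : Category} (a b a' b' : C) (f : Hom a b) (g : Hom a' b') :
  existT (fun xy : C * C => Hom (fst xy) (snd xy)) (a, b) f = existT _ (a', b') g ->
  forall (E1 : a = a') (E2 : b = b'), comp (idcast E2) f = comp g (idcast E1).
Proof.
  intros H. pose proof (f_equal (@projT1 _ _) H) as E0. cbn [projT1] in E0.
  injection E0 as Ea Eb. subst a' b'.
  apply inj_pair2 in H. subst g. intros E1 E2. rewrite cast_id_l, cast_id_r. reflexivity.
Qed.

Lemma arr_eta {B : Category} (a : arr_ob B) : a = Build_arr_ob B (a_src a) (a_tgt a) (a_map a).
Proof. destruct a; reflexivity. Qed.

Lemma arr_eq_cast {B : Category} (a : arr_ob B) S T (m : Hom S T) :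
  a = Build_arr_ob B S T m ->
  forall (E1 : S = a_src a) (E2 : T = a_tgt a), comp (a_map a) (idcast E1) = comp (idcast E2) m.
Proof.
  intros H. subst a. simpl. intros E1 E2. rewrite cast_id_l, cast_id_r. reflexivity.
Qed.

Lemma parr_eq_sec {B : Category} (a : parr_ob B) S T (m : Hom S T) s ok :
  a = Build_parr_ob B S T m s ok ->
  forall (E1 : S = pa_src a) (E2 : T = pa_tgt a), comp (pa_sec a) (idcast E2) = comp (idcast E1) s.
Proof.
  intros H. subst a. simpl. intros E1 E2. rewrite cast_id_l, cast_id_r. reflexivity.
Qed.

Lemma arrhom_existT {B : Category} (a b a' b' : arr_ob B) (f : arr_hom a b) (g : arr_hom a' b') :
  existT (fun xy : Arrow B * Arrow B => Hom (fst xy) (snd xy)) (a, b) f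
  = existT (fun xy : Arrow B * Arrow B => Hom (fst xy) (snd xy)) (a', b') g ->
  forall (E1 : a_src a = a_src a') (E2 : a_tgt a = a_tgt a')
         (E3 : a_src b = a_src b') (E4 : a_tgt b = a_tgt b'),
  comp (idcast E3) (fst (proj1_sig f)) = comp (fst (proj1_sig g)) (idcast E1) /\
  comp (idcast E4) (snd (proj1_sig f)) = comp (snd (proj1_sig g)) (idcast E2).
Proof.
  intros H. pose proof (f_equal (@projT1 _ _) H) as E0. cbn [projT1] in E0.
  injection E0 as Ea Eb. subst a' b'.
  apply inj_pair2 in H. subst g. intros. rewrite !cast_id_l, !cast_id_r. split; reflexivity.
Qed.

Lemma arrhom_existT_conv {B : Category} (a b a' b' : arr_ob B) (Ea : a = a') (Eb : b = b')
  (f : arr_hom a b) (g : arr_hom a' b')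
  (E1 : a_src a = a_src a') (E2 : a_tgt a = a_tgt a')
  (E3 : a_src b = a_src b') (E4 : a_tgt b = a_tgt b') :
  fst (proj1_sig g) = comp (idcast E3) (comp (fst (proj1_sig f)) (idcast (eq_sym E1))) ->
  snd (proj1_sig g) = comp (idcast E4) (comp (snd (proj1_sig f)) (idcast (eq_sym E2))) ->
  existT (fun xy : Arrow B * Arrow B => Hom (fst xy) (snd xy)) (a, b) f
  = existT (fun xy : Arrow B * Arrow B => Hom (fst xy) (snd xy)) (a', b') g.
Proof.
  subst a' b'. rewrite !cast_id_l, !cast_id_r. intros H1 H2.
  f_equal. apply sig_eq_pi. destruct f as [[f1 f2] Hf], g as [[g1 g2] Hg]. simpl in *.
  subst. reflexivity.
Qed.

Lemma pb_cast {B : Category} {A I A' I' A2 I2 A2' I2' : B}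
  (m : Hom A I) (m' : Hom A' I') (top : Hom A A') (bot : Hom I I')
  (m2 : Hom A2 I2) (m2' : Hom A2' I2')
  (E1 : A = A2) (E2 : I = I2) (E3 : A' = A2') (E4 : I' = I2') :
  pbsq m m' top bot ->
  comp (idcast E2) m = comp m2 (idcast E1) ->
  comp (idcast E4) m' = comp m2' (idcast E3) ->
  pbsq m2 m2' (comp (idcast E3) (comp top (idcast (eq_sym E1))))
              (comp (idcast E4) (comp bot (idcast (eq_sym E2)))).
Proof.
  destruct E1, E2, E3, E4. simpl. rewrite !comp_idl, !comp_idr.
  intros Pb H1 H2. subst. exact Pb.
Qed.

Lemma cast_merge' {C : Category} {a b c d : C} (E1 : a = b) (E2 : b = c) (E3 : a = c) (r : Hom d a) :
  comp (idcast E2) (comp (idcast E1) r) = comp (idcast E3) r.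
Proof. rewrite <- comp_assoc, (idcast_comp E1 E2 E3). reflexivity. Qed.

Lemma cast_chain_id {C : Category} {a b c : C} (E1 : a = b) (E2 : b = c) (E3 : c = a) :
  comp (idcast E3) (comp (idcast E2) (idcast E1)) = idm a.
Proof. destruct E1, E2. rewrite cast_id_l. simpl. apply comp_idl. Qed.

Lemma cast_pair_id {C : Category} {a b : C} (E1 : a = b) (E2 : b = a) :
  comp (idcast E2) (idcast E1) = idm a.
Proof. apply idcast_inv. Qed.

Lemma arr_eq_cast2 {B : Category} (a : arr_ob B) S T (m : Hom S T) :
  a = Build_arr_ob B S T m ->
  forall (E1 : a_src a = S) (E2 : a_tgt a = T), comp (idcast E2) (a_map a) = comp m (idcast E1).
Proof.
  intros H. subst a. simpl. intros E1 E2. rewrite cast_id_l, cast_id_r. reflexivity.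
Qed.

Lemma parr_eq_sec2 {B : Category} (a : parr_ob B) S T (m : Hom S T) s ok :
  a = Build_parr_ob B S T m s ok ->
  forall (E1 : pa_src a = S) (E2 : pa_tgt a = T), comp (idcast E1) (pa_sec a) = comp s (idcast E2).
Proof.
  intros H. subst a. simpl. intros E1 E2. rewrite cast_id_l, cast_id_r. reflexivity.
Qed.

Lemma arrhom_existT2 {B : Category} (a b a' b' : arr_ob B) (f : arr_hom a b) (g : arr_hom a' b') :
  existT (fun xy : Arrow B * Arrow B => Hom (fst xy) (snd xy)) (a, b) f
  = existT (fun xy : Arrow B * Arrow B => Hom (fst xy) (snd xy)) (a', b') g ->
  forall (E1 : a_src a' = a_src a) (E2 : a_tgt a' = a_tgt a)
         (E3 : a_src b' = a_src b) (E4 : a_tgt b' = a_tgt b),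
  comp (fst (proj1_sig f)) (idcast E1) = comp (idcast E3) (fst (proj1_sig g)) /\
  comp (snd (proj1_sig f)) (idcast E2) = comp (idcast E4) (snd (proj1_sig g)).
Proof.
  intros H. pose proof (f_equal (@projT1 _ _) H) as E0. cbn [projT1] in E0.
  injection E0 as Ea Eb. subst a' b'.
  apply inj_pair2 in H. subst g. intros. rewrite !cast_id_l, !cast_id_r. split; reflexivity.
Qed.

Section Fwd.
Context (B E D : Category) (q : Functor E B) (chi : Functor D E)
  (hpres : preserves_cartesian q chi).
Local Notation Cp := (Cart (Fcomp q chi)).
Local Notation Cq := (Cart q).
Local Notation K := (CartF hpres).
Local Notation pp := (CartProj (Fcomp q chi)).
Local Notation pq := (CartProj q).
Context (hp : is_fibration (Fcomp q chi)) (hdisc : discrete_fibration K).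
Context (G : Functor Cq Cp) (eta : forall x : Cp, Hom x (fobj G (fobj K x)))
  (eps : forall y : Cq, Hom (fobj K (fobj G y)) y)
  (N1 : forall (x x' : Cp) (f : Hom x x'), comp (eta x') f = comp (fmap G (fmap K f)) (eta x))
  (N2 : forall (y y' : Cq) (g : Hom y y'), comp g (eps y) = comp (eps y') (fmap K (fmap G g)))
  (T1 : forall x : Cp, comp (eps (fobj K x)) (fmap K (eta x)) = idm (fobj K x))
  (T2 : forall y : Cq, comp (fmap G (eps y)) (eta (fobj G y)) = idm (fobj G y)).

Lemma hp' (y : Cp) (I : B) (u : Hom I (fobj pp y)) :
  exists (x : Cp) (f : Hom x y),
    existT (fun J => Hom J (fobj pp y)) (fobj pp x) (fmap pp f) = existT _ I u.
Proof.
  destruct (hp y I u) as [x [f [Cf H]]].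
  exists x, (exist _ f Cf). exact H.
Qed.

Lemma adj_bij (d : Cp) (e : Cq) (m : Hom d (fobj G e)) :
  m = comp (fmap G (comp (eps e) (fmap K m))) (eta d).
Proof.
  rewrite fmap_comp, comp_assoc, <- N1, <- comp_assoc, T2, comp_idl. reflexivity.
Qed.

Lemma L1 (e e' : Cq) (f : Hom e e') :
  pbsq (fmap pq (eps e)) (fmap pq (eps e')) (fmap pp (fmap G f)) (fmap pq f).
Proof.
  intros W x y H.
  destruct (hp' (fobj G e') W x) as [d [a Ha]].
  pose proof (f_equal (@projT1 _ _) Ha) as EW; simpl in EW; subst W.
  apply inj_pair2 in Ha; subst x.
  assert (Hk : comp (fmap pq f) y = fmap pq (comp (eps e') (fmap K a))).
  { rewrite fmap_comp. symmetry. exact H. }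
  destruct (cart_all q _ _ f (fobj K d) (comp (eps e') (fmap K a)) y Hk) as [k [[Ek Pk] Uk]].
  assert (Ga : comp (fmap G f) (comp (fmap G k) (eta d)) = a).
  { rewrite <- comp_assoc, <- fmap_comp, Ek. symmetry. apply adj_bij. }
  exists (fmap pp (comp (fmap G k) (eta d))). split.
  - split.
    + etransitivity; [symmetry; apply (fmap_comp _ _ pp)|]. rewrite Ga. reflexivity.
    + change (fmap pp (comp (fmap G k) (eta d))) with (fmap pq (fmap K (comp (fmap G k) (eta d)))).
      apply (fmap_comp_r pq). rewrite (fmap_comp _ _ K), <- comp_assoc, <- N2, comp_assoc, T1, comp_idr. exact Pk.
  - intros h' [H1 H2].
    destruct (cart_all (Fcomp q chi) _ _ (fmap G f) d a h' H1) as [m [[Em Pm] _]].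
    assert (Ekm : k = comp (eps e) (fmap K m)).
    { apply Uk. split.
      - rewrite <- comp_assoc, N2, comp_assoc, <- fmap_comp, Em. reflexivity.
      - rewrite fmap_comp. change (fmap pq (fmap K m)) with (fmap pp m). rewrite Pm. exact H2. }
    rewrite Ekm, <- adj_bij. exact Pm.
Qed.

Lemma zcomm (e e' : Cq) (f : Hom e e') :
  comp (fmap pq (eps e')) (fmap pp (fmap G f)) = comp (fmap pq f) (fmap pq (eps e)).
Proof.
  change (fmap pp (fmap G f)) with (fmap pq (fmap K (fmap G f))).
  apply (fmap_comp_r pq). transitivity (fmap pq (comp f (eps e))).
  - f_equal. symmetry. apply N2.
  - apply fmap_comp.
Qed.

Definition zob (e : Cq) : Cart (cod B) :=
  Build_arr_ob B (fobj pp (fobj G e)) (fobj pq e) (fmap pq (eps e)).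

Definition zah (e e' : Cq) (f : Hom e e') : @arr_hom B (zob e) (zob e') :=
  exist _ (fmap pp (fmap G f), fmap pq f) (zcomm e e' f).

Definition zhom (e e' : Cq) (f : Hom e e') : Hom (zob e) (zob e') :=
  exist _ (zah e e' f) (pb_cod (zob e) (zob e') (zah e e' f) (L1 e e' f)).

Definition zeta : Functor Cq (Cart (cod B)).
Proof.
  refine {| fobj := zob; fmap := zhom |}.
  - intros e. apply sig_eq_pi, sig_eq_pi. simpl. repeat (rewrite !fmap_id; simpl). reflexivity.
  - intros x y z f g. apply sig_eq_pi, sig_eq_pi. unfold zhom, zah. cbn [proj1_sig].
    rewrite !fmap_comp. reflexivity.
Defined.

Lemma pok (d : Cp) : comp (fmap pq (eps (fobj K d))) (fmap pp (eta d)) = idm (fobj pp d).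
Proof.
  change (fmap pp (eta d)) with (fmap pq (fmap K (eta d))).
  apply (fmap_comp_r pq). transitivity (fmap pq (idm (fobj K d))).
  - f_equal. apply T1.
  - exact (fmap_id _ _ pq (fobj K d)).
Qed.

Definition mkP (e : Cq) (s : Hom (fobj pq e) (fobj pp (fobj G e)))
  (ok : comp (fmap pq (eps e)) s = idm (fobj pq e)) : Cart (codp B) :=
  Build_parr_ob B (fobj pp (fobj G e)) (fobj pq e) (fmap pq (eps e)) s ok.

Definition pob (d : Cp) : Cart (codp B) := mkP (fobj K d) (fmap pp (eta d)) (pok d).

Lemma psec (d d' : Cp) (f : Hom d d') :
  comp (fmap pp (eta d')) (fmap pp f) = comp (fmap pp (fmap G (fmap K f))) (fmap pp (eta d)).
Proof.
  apply (fmap_comp_r pp). transitivity (fmap pp (comp (fmap G (fmap K f)) (eta d))).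
  - f_equal. apply N1.
  - apply fmap_comp.
Qed.

Definition pah (d d' : Cp) (f : Hom d d') : @parr_hom B (pob d) (pob d') :=
  exist _ (fmap pp (fmap G (fmap K f)), fmap pp f)
    (conj (zcomm _ _ (fmap K f)) (psec d d' f)).

Definition phom (d d' : Cp) (f : Hom d d') : Hom (pob d) (pob d') :=
  exist _ (pah d d' f) (pb_codp (pob d) (pob d') (pah d d' f) (L1 _ _ (fmap K f))).

Definition Phi : Functor Cp (Cart (codp B)).
Proof.
  refine {| fobj := pob; fmap := phom |}.
  - intros e. apply sig_eq_pi, sig_eq_pi. unfold phom, pah. cbn [proj1_sig].
    rewrite !fmap_id. reflexivity.
  - intros x y z f g. apply sig_eq_pi, sig_eq_pi. unfold phom, pah. cbn [proj1_sig].
    rewrite !fmap_comp. reflexivity.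
Defined.


Lemma unit_unique (x : Cp) (f : Hom x (fobj G (fobj K x))) :
  comp (eps (fobj K x)) (fmap K f) = idm _ -> f = eta x.
Proof.
  intros H. rewrite (adj_bij _ _ f), H, fmap_id, comp_idl. reflexivity.
Qed.

Lemma mkP_eq (e1 e2 : Cq) s1 s2 ok1 ok2 :
  existT (fun e => Hom (fobj pq e) (fobj pp (fobj G e))) e1 s1 = existT _ e2 s2 ->
  mkP e1 s1 ok1 = mkP e2 s2 ok2.
Proof.
  intros H. pose proof (f_equal (@projT1 _ _) H) as E0. cbn [projT1] in E0. subst e2.
  apply inj_pair2 in H. subst s2. f_equal. apply proof_irrelevance.
Qed.

Lemma sec_eq (a' : Cp) (e1 e2 : Cq) (k1 : Hom e1 (fobj K a')) (k2 : Hom e2 (fobj K a'))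
  (s1 : Hom (fobj pq e1) (fobj pp (fobj G e1))) (s2 : Hom (fobj pq e2) (fobj pp (fobj G e2))) :
  existT (fun e => Hom e (fobj K a')) e1 k1 = existT _ e2 k2 ->
  comp (fmap pq (eps e1)) s1 = idm _ ->
  comp (fmap pp (fmap G k1)) s1 = comp (fmap pp (eta a')) (fmap pq k1) ->
  comp (fmap pq (eps e2)) s2 = idm _ ->
  comp (fmap pp (fmap G k2)) s2 = comp (fmap pp (eta a')) (fmap pq k2) ->
  existT (fun e => Hom (fobj pq e) (fobj pp (fobj G e))) e1 s1 = existT _ e2 s2.
Proof.
  intros H. pose proof (f_equal (@projT1 _ _) H) as E0. cbn [projT1] in E0. subst e2.
  apply inj_pair2 in H. subst k2. intros A1 B1 A2 B2. f_equal.
  assert (Hc : comp (fmap pq (eps (fobj K a'))) (comp (fmap pp (eta a')) (fmap pq k1))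
               = comp (fmap pq k1) (idm _)).
  { rewrite <- comp_assoc, pok, comp_idl, comp_idr. reflexivity. }
  destruct (L1 e1 (fobj K a') k1 _ _ _ Hc) as [h [_ U]].
  transitivity h; [symmetry|]; apply U; split; assumption.
Qed.

Lemma SP2 (c : Cq) (s : Cart (codp B)) :
  fobj (Fcomp (Incl (cod B)) zeta) c = fobj (Fcomp (Forget B) (Incl (codp B))) s ->
  exists! a : Cp, fobj K a = c /\ fobj Phi a = s.
Proof.
  intros Hc. destruct s as [S T mm sec ok]. simpl in Hc.
  pose proof (f_equal (@a_src _) Hc) as ES. simpl in ES. subst S.
  pose proof (f_equal (@a_tgt _) Hc) as ET. simpl in ET. subst T.
  apply arr_mk_inj in Hc. subst mm.
  assert (Hh : comp (fmap pq (eps c)) sec = fmap pq (idm c)).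
  { exact (eq_trans ok (eq_sym (fmap_id _ _ pq c))). }
  destruct (cart_all q _ _ (eps c) c (idm c) sec Hh) as [h [[Eh Ph] Uh]].
  destruct (hdisc (fobj G c) c h) as [[x f] [Hz Uz]]. cbn [projT1 projT2] in Hz.
  exists x. split.
  - pose proof (f_equal (@projT1 _ _) Hz) as Ex. cbn [projT1] in Ex. subst c.
    apply inj_pair2 in Hz. split; [reflexivity|].
    assert (Hf : f = eta x).
    { apply unit_unique. rewrite <- Eh. f_equal. exact Hz. }
    simpl. unfold pob. apply mkP_eq. f_equal.
    rewrite <- Ph, <- Hz, Hf. reflexivity.
  - intros x' [H1 H2]. subst c.
    assert (Hk : h = fmap K (eta x')).
    { apply Uh. split.
      - exact (T1 x').
      - simpl in H2. unfold pob, mkP in H2. apply parr_sec_inj in H2. exact H2. }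
    assert (Z := Uz (existT _ x' (eta x'))). simpl in Z.
    rewrite Hk in Z. specialize (Z eq_refl).
    exact (f_equal (@projT1 _ _) Z).
Qed.


Lemma SP3 (a a' : Cp) (g : Hom (fobj K a) (fobj K a'))
  (t : Hom (fobj Phi a) (fobj Phi a')) :
  existT (fun xy : Arrow B * Arrow B => Hom (fst xy) (snd xy))
    (fobj (Fcomp (Incl (cod B)) zeta) (fobj K a), fobj (Fcomp (Incl (cod B)) zeta) (fobj K a'))
    (fmap (Fcomp (Incl (cod B)) zeta) g)
  = existT (fun xy : Arrow B * Arrow B => Hom (fst xy) (snd xy))
    (fobj (Fcomp (Forget B) (Incl (codp B))) (fobj Phi a),
     fobj (Fcomp (Forget B) (Incl (codp B))) (fobj Phi a'))
    (fmap (Fcomp (Forget B) (Incl (codp B))) t) ->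
  exists! f : Hom a a', fmap K f = g /\ fmap Phi f = t.
Proof.
  intros H. apply inj_pair2 in H.
  destruct t as [[[t1 t2] [tc ts]] tcart].
  apply (f_equal (@proj1_sig _ _)) in H. cbn in H.
  injection H as H1 H2. subst t1 t2.
  destruct (hdisc a' (fobj K a) g) as [[x f] [Hz Uz]]. cbn [projT1 projT2] in Hz.
  assert (Exa : x = a).
  { destruct (SP2 (fobj K a) (fobj Phi a) eq_refl) as [a0 [_ U0]].
    transitivity a0; [symmetry|]; apply U0; split; try reflexivity.
    - exact (f_equal (@projT1 _ _) Hz).
    - simpl. unfold pob. apply mkP_eq.
      apply (sec_eq a' _ _ (fmap K f) g); try apply pok.
      + exact Hz.
      + symmetry. apply psec.
      + symmetry. exact ts. }
  subst x. apply inj_pair2 in Hz.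
  exists f. split.
  - split; [exact Hz|]. apply sig_eq_pi, sig_eq_pi.
    transitivity (fmap pp (fmap G (fmap K f)), fmap pq (fmap K f)); [reflexivity|].
    rewrite Hz. reflexivity.
  - intros f' [E1 _]. apply (disc_faithful K hdisc). rewrite Hz, E1. reflexivity.
Qed.

Lemma fwd :
  exists (Phi : Functor (Cart (Fcomp q chi)) (Cart (codp B)))
         (zeta : Functor (Cart q) (Cart (cod B))),
    fibred_functor (CartProj (Fcomp q chi)) (CartProj (codp B)) Phi /\
    fibred_functor (CartProj q) (CartProj (cod B)) zeta /\
    strict_pullback (CartF hpres) Phi
                    (Fcomp (Incl (cod B)) zeta)
                    (Fcomp (Forget B) (Incl (codp B))).
Proof.
  exists Phi, zeta. split; [|split].
  - split; [split; intros; reflexivity|]. intros. apply cart_all.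
  - split; [split; intros; reflexivity|]. intros. apply cart_all.
  - split; [|split].
    + split; [intros; reflexivity|]. intros x y f.
      apply (f_equal (existT _ _)). apply sig_eq_pi. reflexivity.
    + exact SP2.
    + exact SP3.
Qed.

End Fwd.

Section Rev.
Context (B E D : Category) (q : Functor E B) (chi : Functor D E)
  (hpres : preserves_cartesian q chi).
Local Notation Cp := (Cart (Fcomp q chi)).
Local Notation Cq := (Cart q).
Local Notation K := (CartF hpres).
Local Notation pp := (CartProj (Fcomp q chi)).
Local Notation pq := (CartProj q).
Context (hq : is_fibration q) (hdisc : discrete_fibration K)
  (Phi : Functor Cp (Cart (codp B))) (zeta : Functor Cq (Cart (cod B)))
  (HPf : fibred_functor pp (CartProj (codp B)) Phi)
  (HZf : fibred_functor pq (CartProj (cod B)) zeta)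
  (SP : strict_pullback K Phi (Fcomp (Incl (cod B)) zeta) (Fcomp (Forget B) (Incl (codp B)))).

Local Notation Zo e := (fobj zeta e : arr_ob B).
Local Notation Zh f := (proj1_sig (fmap zeta f)).
Local Notation Po d := (fobj Phi d : parr_ob B).
Local Notation Ph f := (proj1_sig (fmap Phi f)).

Lemma Tz (e : Cq) : a_tgt (Zo e) = fobj pq e.
Proof. exact (proj1 (proj1 HZf) e). Qed.

Lemma NZ (e e' : Cq) (f : Hom e e') (E1 : a_tgt (Zo e) = fobj pq e) (E2 : a_tgt (Zo e') = fobj pq e') :
  comp (idcast E2) (snd (proj1_sig (Zh f))) = comp (fmap pq f) (idcast E1).
Proof. apply hom_existT. exact (proj2 (proj1 HZf) e e' f). Qed.

Lemma Tp (d : Cp) : pa_tgt (Po d) = fobj pp d.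
Proof. exact (proj1 (proj1 HPf) d). Qed.

Lemma NP (d d' : Cp) (f : Hom d d') (E1 : pa_tgt (Po d) = fobj pp d) (E2 : pa_tgt (Po d') = fobj pp d') :
  comp (idcast E2) (snd (proj1_sig (Ph f))) = comp (fmap pp f) (idcast E1).
Proof. apply hom_existT. exact (proj2 (proj1 HPf) d d' f). Qed.

Lemma SPo (d : Cp) : Zo (fobj K d) = Build_arr_ob B (pa_src (Po d)) (pa_tgt (Po d)) (pa_map (Po d)).
Proof. exact (proj1 (proj1 SP) d). Qed.

Lemma SPh (x y : Cp) (f : Hom x y) :
  existT (fun xy : Arrow B * Arrow B => Hom (fst xy) (snd xy))
    (Zo (fobj K x), Zo (fobj K y)) (Zh (fmap K f))
  = existT (fun xy : Arrow B * Arrow B => Hom (fst xy) (snd xy))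
    (Build_arr_ob B (pa_src (Po x)) (pa_tgt (Po x)) (pa_map (Po x)),
     Build_arr_ob B (pa_src (Po y)) (pa_tgt (Po y)) (pa_map (Po y)))
    (fmap (Forget B) (Ph f)).
Proof. exact (proj2 (proj1 SP) x y f). Qed.

Lemma hq' (y : Cq) (I : B) (u : Hom I (fobj pq y)) :
  exists (x : Cq) (f : Hom x y),
    existT (fun J => Hom J (fobj pq y)) (fobj pq x) (fmap pq f) = existT _ I u.
Proof.
  destruct (hq y I u) as [x [f [Cf H]]].
  exists x, (exist _ f Cf). exact H.
Qed.

Lemma Zcomp (e1 e2 e3 : Cq) (a : Hom e2 e3) (b : Hom e1 e2) (c : Hom e1 e3) :
  comp a b = c ->
  fst (proj1_sig (Zh c)) = comp (fst (proj1_sig (Zh a))) (fst (proj1_sig (Zh b))) /\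
  snd (proj1_sig (Zh c)) = comp (snd (proj1_sig (Zh a))) (snd (proj1_sig (Zh b))).
Proof. intros <-. rewrite fmap_comp. split; reflexivity. Qed.

Lemma rw2id {C : Category} {a b w : C} (f : Hom b a) (g : Hom a b) (r : Hom w a) :
  comp f g = idm a -> comp f (comp g r) = r.
Proof. intros H. rewrite <- comp_assoc, H. apply comp_idl. Qed.

Lemma univ (e : Cq) : exists (d : Cp) (ep : Hom (fobj K d) e),
  forall (x : Cp) (g : Hom (fobj K x) e), exists! f : Hom x d, comp ep (fmap K f) = g.
Proof.
  destruct (hq' e (a_src (Zo e)) (comp (idcast (Tz e)) (a_map (Zo e)))) as [e1 [eps1 H1]].
  pose proof (f_equal (@projT1 _ _) H1) as E1. cbn [projT1] in E1.
  pose proof (sig_cast _ _ _ _ _ H1 E1) as Heps. clear H1.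
  pose proof (proj2_sig (Zh eps1)) as Hc1. cbn beta in Hc1.
  pose proof (cod_pb _ _ (proj1_sig (fmap zeta eps1)) (proj2_sig (fmap zeta eps1))) as Pb1.
  pose proof (NZ e1 e eps1 (Tz e1) (Tz e)) as N1.
  assert (Hb1 : snd (proj1_sig (Zh eps1)) =
                comp (a_map (Zo e)) (comp (idcast E1) (idcast (Tz e1)))).
  { apply (cast_cancel (Tz e)). rewrite N1, Heps, !comp_assoc. reflexivity. }
  assert (Hs : comp (a_map (Zo e)) (comp (idcast E1) (idcast (Tz e1)))
               = comp (snd (proj1_sig (Zh eps1))) (idm _)).
  { rewrite comp_idr, Hb1. reflexivity. }
  destruct (Pb1 _ _ _ Hs) as [sg [[Sg1 Sg2] _]].
  set (s := Build_parr_ob B (a_src (Zo e1)) (a_tgt (Zo e1)) (a_map (Zo e1)) sg Sg2).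
  destruct (proj1 (proj2 SP) e1 s (arr_eta _)) as [d [[Hd1 Hd2] _]].
  subst e1.
  exists d, eps1. intros x g.
  assert (EAx : a_src (Zo (fobj K x)) = pa_src (Po x)) by exact (f_equal (@a_src B) (SPo x)).
  assert (EBx : a_tgt (Zo (fobj K x)) = pa_tgt (Po x)) by exact (f_equal (@a_tgt B) (SPo x)).
  assert (EAd : a_src (Zo (fobj K d)) = pa_src (Po d)) by exact (f_equal (@a_src B) (SPo d)).
  assert (EBd : a_tgt (Zo (fobj K d)) = pa_tgt (Po d)) by exact (f_equal (@a_tgt B) (SPo d)).
  pose proof (arr_eq_cast _ _ _ _ (SPo x)) as Rx.
  pose proof (arr_eq_cast2 _ _ _ _ (SPo d)) as Rd.
  pose proof (parr_eq_sec _ _ _ _ _ _ Hd2) as Sd.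
  pose proof (parr_eq_sec2 _ _ _ _ _ _ Hd2) as Sd2.
  pose proof (proj2_sig (Zh g)) as Hcg. cbn beta in Hcg.
  pose proof (NZ _ _ g (Tz (fobj K x)) (Tz e)) as Ng.
  set (w := comp (idcast (eq_sym E1)) (comp (fst (proj1_sig (Zh g)))
              (comp (idcast (eq_sym EAx)) (comp (pa_sec (Po x)) (idcast (eq_sym (Tp x))))))).
  assert (C1 : comp (fmap pq eps1) w = fmap pq g).
  { rewrite Heps. unfold w. rewrite !comp_assoc.
    rewrite (cast_merge' (eq_sym E1) E1 eq_refl), cast_id_l.
    rewrite (rw2 _ _ _ _ _ Hcg).
    rewrite (rw2 _ _ _ _ _ (Rx (eq_sym EAx) (eq_sym EBx))).
    rewrite (rw2id _ _ _ (pa_sec_ok _ _)).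
    rewrite <- comp_assoc, Ng, comp_assoc, cast_chain_id, comp_idr. reflexivity. }
  destruct (cart_all q _ _ eps1 (fobj K x) g w C1) as [g' [[Eg' Pg'] Ug']].
  pose proof (proj2_sig (Zh g')) as Hcg'. cbn beta in Hcg'.
  destruct (Zcomp _ _ _ eps1 g' g Eg') as [Zc1 Zc2].
  pose proof (NZ _ _ g' (Tz (fobj K x)) (Tz (fobj K d))) as Ng'.
  pose proof (cod_pb _ _ (proj1_sig (fmap zeta g')) (proj2_sig (fmap zeta g'))) as Pbg'.
  assert (tsec : comp (pa_sec (Po d)) (comp (idcast EBd) (comp (snd (proj1_sig (Zh g'))) (idcast (eq_sym EBx))))
     = comp (comp (idcast EAd) (comp (fst (proj1_sig (Zh g'))) (idcast (eq_sym EAx)))) (pa_sec (Po x))).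
  { rewrite (rw2 _ _ _ _ _ (Sd EAd EBd)). rewrite !comp_assoc. f_equal.
    assert (Hw : comp (a_map (Zo e)) (comp (fst (proj1_sig (Zh g))) (comp (idcast (eq_sym EAx)) (pa_sec (Po x))))
       = comp (snd (proj1_sig (Zh eps1))) (comp (snd (proj1_sig (Zh g'))) (idcast (eq_sym EBx)))).
    { rewrite (rw2 _ _ _ _ _ Hcg), (rw2 _ _ _ _ _ (Rx (eq_sym EAx) (eq_sym EBx))), (pa_sec_ok _ _), comp_idr.
      rewrite <- comp_assoc, <- Zc2. reflexivity. }
    destruct (Pb1 _ _ _ Hw) as [h [_ Uh]].
    transitivity h; [symmetry|]; apply Uh; split.
    - rewrite <- comp_assoc, Sg1, !comp_assoc.
      rewrite (rw2 _ _ _ _ _ Ng'), Pg'. unfold w. rewrite !comp_assoc.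
      rewrite (cast_merge' (eq_sym E1) E1 eq_refl), cast_id_l.
      rewrite cast_chain_id, comp_idr. reflexivity.
    - rewrite <- comp_assoc, Sg2, comp_idl. reflexivity.
    - rewrite <- comp_assoc, <- Zc1. reflexivity.
    - rewrite (rw2 _ _ _ _ _ Hcg'), (rw2 _ _ _ _ _ (Rx (eq_sym EAx) (eq_sym EBx))), (pa_sec_ok _ _), comp_idr.
      reflexivity. }
  assert (tcomm : comp (pa_map (Po d)) (comp (idcast EAd) (comp (fst (proj1_sig (Zh g'))) (idcast (eq_sym EAx))))
     = comp (comp (idcast EBd) (comp (snd (proj1_sig (Zh g'))) (idcast (eq_sym EBx)))) (pa_map (Po x))).
  { rewrite <- (rw2 _ _ _ _ _ (Rd EAd EBd)), (rw2 _ _ _ _ _ Hcg'),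
      (Rx (eq_sym EAx) (eq_sym EBx)), !comp_assoc. reflexivity. }
  pose proof (pb_cast _ _ _ _ (pa_map (Po x)) (pa_map (Po d)) EAx EBx EAd EBd Pbg'
     (arr_eq_cast2 _ _ _ _ (SPo x) EAx EBx) (Rd EAd EBd)) as tpb.
  pose (tt := exist (fun st : Hom (pa_src (Po x)) (pa_src (Po d)) * Hom (pa_tgt (Po x)) (pa_tgt (Po d)) =>
       comp (pa_map (Po d)) (fst st) = comp (snd st) (pa_map (Po x)) /\
       comp (pa_sec (Po d)) (snd st) = comp (fst st) (pa_sec (Po x)))
     (comp (idcast EAd) (comp (fst (proj1_sig (Zh g'))) (idcast (eq_sym EAx))),
      comp (idcast EBd) (comp (snd (proj1_sig (Zh g'))) (idcast (eq_sym EBx))))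
     (conj tcomm tsec) : @parr_hom B (Po x) (Po d)).
  pose (t := exist (cartesian (codp B)) tt (pb_codp _ _ tt tpb) : Hom (fobj Phi x) (fobj Phi d)).
  assert (HX : existT (fun xy : Arrow B * Arrow B => Hom (fst xy) (snd xy))
    (fobj (Fcomp (Incl (cod B)) zeta) (fobj K x), fobj (Fcomp (Incl (cod B)) zeta) (fobj K d))
    (fmap (Fcomp (Incl (cod B)) zeta) g')
  = existT (fun xy : Arrow B * Arrow B => Hom (fst xy) (snd xy))
    (fobj (Fcomp (Forget B) (Incl (codp B))) (fobj Phi x),
     fobj (Fcomp (Forget B) (Incl (codp B))) (fobj Phi d))
    (fmap (Fcomp (Forget B) (Incl (codp B))) t)).
  { refine (arrhom_existT_conv (Zo (fobj K x)) (Zo (fobj K d)) _ _ (SPo x) (SPo d) (Zh g')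
              (fmap (Forget B) tt) EAx EBx EAd EBd _ _); reflexivity. }
  destruct (proj2 (proj2 SP) x d g' t HX) as [f [[Ef1 Ef2] Uf]].
  exists f. split.
  - rewrite Ef1. exact Eg'.
  - intros f' Hf'. apply (disc_faithful K hdisc). rewrite Ef1. apply Ug'. split; [exact Hf'|].
    destruct (proj2_sig (Ph f')) as [Hu1 Hu2].
    pose proof (NP x d f' (Tp x) (Tp d)) as NPf.
    destruct (arrhom_existT2 _ _ _ _ _ _ (SPh x d f') (eq_sym EAx) (eq_sym EBx) (eq_sym EAd) (eq_sym EBd))
      as [SPf1 _].
    destruct (Zcomp _ _ _ eps1 (fmap K f') g Hf') as [Zf1 _].
    change (fmap pq (fmap K f')) with (fmap pp f').
    symmetry. unfold w. rewrite Zf1, !comp_assoc.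
    assert (SPf1' : comp (fst (proj1_sig (Zh (fmap K f')))) (idcast (eq_sym EAx))
                    = comp (idcast (eq_sym EAd)) (fst (proj1_sig (Ph f')))) by exact SPf1.
    rewrite (rw2 _ _ _ _ _ SPf1').
    rewrite <- (rw2 _ _ _ _ (idcast (eq_sym (Tp x))) Hu2).
    rewrite (rw2 _ _ _ _ _ (Sd2 (eq_sym EAd) (eq_sym EBd))).
    rewrite (rw2 _ _ _ _ _ Sg1), ?comp_assoc.
    rewrite (cast_merge' E1 (eq_sym E1) eq_refl), cast_id_l.
    rewrite (cast_merge' (eq_sym EBd) (Tz (fobj K d)) (Tp d)).
    rewrite (rw2 _ _ _ _ _ NPf), idcast_inv, comp_idr. reflexivity.
Qed.

End Rev.

Lemma rev_dir (B E D : Category) (q : Functor E B) (chi : Functor D E)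
  (hpres : preserves_cartesian q chi) (hq : is_fibration q)
  (hdisc : discrete_fibration (CartF hpres))
  (Phi : Functor (Cart (Fcomp q chi)) (Cart (codp B)))
  (zeta : Functor (Cart q) (Cart (cod B)))
  (HPf : fibred_functor (CartProj (Fcomp q chi)) (CartProj (codp B)) Phi)
  (HZf : fibred_functor (CartProj q) (CartProj (cod B)) zeta)
  (SP : strict_pullback (CartF hpres) Phi (Fcomp (Incl (cod B)) zeta)
          (Fcomp (Forget B) (Incl (codp B)))) :
  has_right_adjoint (CartF hpres).
Proof.
  apply UA_adj'. intros e. exact (univ B E D q chi hpres hq hdisc Phi zeta HPf HZf SP e).
Qed.

Theorem mainTheorem13 (B E D : Category) (q : Functor E B) (chi : Functor D E)
  (hB : finitely_complete B)
  (hq : is_fibration q)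
  (hp : is_fibration (Fcomp q chi))
  (hpres : preserves_cartesian q chi)
  (hdisc : discrete_fibration (CartF hpres)) :
  has_right_adjoint (CartF hpres) <->
  exists (Phi : Functor (Cart (Fcomp q chi)) (Cart (codp B)))
         (zeta : Functor (Cart q) (Cart (cod B))),
    fibred_functor (CartProj (Fcomp q chi)) (CartProj (codp B)) Phi /\
    fibred_functor (CartProj q) (CartProj (cod B)) zeta /\
    strict_pullback (CartF hpres) Phi
                    (Fcomp (Incl (cod B)) zeta)
                    (Fcomp (Forget B) (Incl (codp B))).
Proof.
  split.
  - intros [G [eta [eps [N1 [N2 [T1 T2]]]]]].
    exact (fwd B E D q chi hpres hp hdisc G eta eps N1 N2 T1 T2).
  - intros [Phi [zeta [HPf [HZf SP]]]].
    exact (rev_dir B E D q chi hpres hq hdisc Phi zeta HPf HZf SP).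
Qed.
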